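(* Let $\Omega$ be a verification operator for $|\Psi\rangle$ with spectral gap $\nu(\Omega)$, and let $\sigma_1,\dots,\sigma_N$ be density operators on $\mathcal H$. Let $\epsilon_j=1-\langle\Psi|\sigma_j|\Psi\rangle$ and $\bar\epsilon=\frac1N\sum_{j=1}^N\epsilon_j$. Then the probability that the independent states $\sigma_1,\dots,\sigma_N$ pass all $N$ tests satisfies $$\prod_{j=1}^N\mathrm{tr}(\Omega\sigma_j)\le[1-\nu(\Omega)\bar\epsilon]^N.$$
   Context: Let $\mathcal H$ be a finite-dimensional Hilbert space and $|\Psi\rangle\in\mathcal H$ a unit vector. A verification operator for $|\Psi\rangle$ is a Hermitian operator $\Omega$ on $\mathcal H$ with $0\le\Omega\le1$ and $\Omega|\Psi\rangle=|\Psi\rangle$, whose eigenvalue $1$ is nondegenerate; with $\beta(\Omega)$ its second largest eigenvalue, the spectral gap is $\nu(\Omega)=1-\beta(\Omega)$. *)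

(* Defs.v *)
(* finite-dimensional Hilbert space H = C^n with
   C = R[i], R : realType (so C is the field of complex numbers). *)
From mathcomp Require Import all_boot all_algebra.
From mathcomp Require Import reals.
From mathcomp.real_closed Require Export complex.
Set Implicit Arguments.
Unset Strict Implicit.
Unset Printing Implicit Defensive.
Import GRing.Theory Num.Theory.
Local Open Scope ring_scope.

Section QDefs.
Variable R : realType.
Local Notation C := R[i].

Definition adjmx m n (A : 'M[C]_(m, n)) : 'M[C]_(n, m) :=
  (map_mx (fun x : C => x^*) A)^T.

Definition inner n (u v : 'cV[C]_n) : C := (adjmx u *m v) 0 0.

Definition unit_vector n (Psi : 'cV[C]_n) : Prop := inner Psi Psi = 1.

Definition hermitian n (A : 'M[C]_n) : Prop := adjmx A = A.

Definition psd n (A : 'M[C]_n) : Prop :=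
  hermitian A /\ forall v : 'cV[C]_n, 0 <= inner v (A *m v).

Definition loewner_le n (A B : 'M[C]_n) : Prop := psd (B - A).

Definition density n (sigma : 'M[C]_n) : Prop := psd sigma /\ \tr sigma = 1.

Definition is_eigenvalue n (A : 'M[C]_n) (a : C) : Prop :=
  exists v : 'cV[C]_n, v != 0 /\ A *m v = a *: v.

(* Verification operator for |Psi>: Hermitian, 0 <= Omega <= 1,
   Omega |Psi> = |Psi>, and eigenvalue 1 nondegenerate (its eigenspace is
   the line spanned by |Psi>). *)
Definition verification_operator n (Omega : 'M[C]_n) (Psi : 'cV[C]_n) : Prop :=
  [/\ hermitian Omega, psd Omega, loewner_le Omega 1%:M,
      Omega *m Psi = Psi &
      forall v : 'cV[C]_n, Omega *m v = v -> exists c : C, v = c *: Psi].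

(* Since 0 <= Omega <= 1 and the eigenvalue 1 (the largest one) is
   nondegenerate, the second largest eigenvalue counted with multiplicity is
   the largest eigenvalue different from 1. *)
Definition second_largest_eigenvalue n (Omega : 'M[C]_n) (beta : C) : Prop :=
  [/\ is_eigenvalue Omega beta, beta != 1 &
      forall a : C, is_eigenvalue Omega a -> a != 1 -> a <= beta].

Definition spectral_gap (beta : C) : C := 1 - beta.

End QDefs.

(* Main.v *)
Require Import Defs.
From mathcomp Require Import all_boot all_algebra.
From mathcomp Require Import reals.
From mathcomp.real_closed Require Import complex.
From mathcomp Require Import all_order sesquilinear spectral ring.
Import Order.TTheory GRing.Theory Num.Theory Num.Def.
Set Implicit Arguments.
Unset Strict Implicit.
Local Open Scope ring_scope.
Local Open Scope sesquilinear_scope.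

Section Helpers.
Variable R : realType.
Local Notation C := R[i].

Lemma adjmxE m n (A : 'M[C]_(m, n)) : adjmx A = A ^t conjC.
Proof. by rewrite /adjmx map_trmx. Qed.

Lemma adjmxK m n (A : 'M[C]_(m, n)) : adjmx (adjmx A) = A.
Proof. by apply/matrixP=> i j; rewrite !mxE conjCK. Qed.

Lemma adjmxM m n p (A : 'M[C]_(m, n)) (B : 'M[C]_(n, p)) :
  adjmx (A *m B) = adjmx B *m adjmx A.
Proof. by rewrite /adjmx map_mxM trmx_mul. Qed.

Lemma innerE n (u v : 'cV[C]_n) : inner u v = \sum_i (u i 0)^* * v i 0.
Proof. by rewrite /inner mxE; apply: eq_bigr => i _; rewrite !mxE. Qed.

Lemma inner_ge0 n (v : 'cV[C]_n) : 0 <= inner v v.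
Proof. by rewrite innerE sumr_ge0 // => i _; rewrite mulrC mul_conjC_ge0. Qed.

Lemma inner_gt0 n (v : 'cV[C]_n) : v != 0 -> 0 < inner v v.
Proof.
move=> vn0; rewrite lt_def inner_ge0 andbT; apply: contra vn0 => /eqP.
rewrite innerE => /psumr_eq0P H; apply/eqP/matrixP => i j.
rewrite ord1 mxE; apply/eqP; rewrite -mul_conjC_eq0 mulrC H //.
by move=> k _; rewrite mulrC mul_conjC_ge0.
Qed.

Lemma innerZr n (u v : 'cV[C]_n) c : inner u (c *: v) = c * inner u v.
Proof. by rewrite /inner -scalemxAr mxE. Qed.

Lemma innerZl n (u v : 'cV[C]_n) c : inner (c *: u) v = c^* * inner u v.
Proof.
rewrite !innerE mulr_sumr; apply: eq_bigr => i _.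
by rewrite mxE rmorphM mulrA.
Qed.


Lemma spectral_decomp n (A : 'M[C]_n) : adjmx A = A ->
  exists Q : 'M[C]_n, exists d : 'rV[C]_n,
   [/\ Q *m adjmx Q = 1%:M, adjmx Q *m Q = 1%:M & A = Q *m diag_mx d *m adjmx Q].
Proof.
move=> hA.
have nA : A \is normalmx.
  by apply/normalmxP; rewrite -adjmxE hA.
have /orthomx_spectralP eqA := nA.
set P := spectralmx A in eqA; set d := spectral_diag A in eqA.
have Pu : P \is unitarymx by apply: spectral_unitarymx.
exists (adjmx P), d; rewrite adjmxK; split.
- by rewrite adjmxE -invmx_unitary // mulVmx // unitarymx_unit.
- by rewrite adjmxE; apply/unitarymxP.
- by rewrite adjmxE -invmx_unitary.
Qed.

Lemma inner_col n (Q : 'M[C]_n) k (v : 'cV[C]_n) :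
  inner (col k Q) v = (adjmx Q *m v) k 0.
Proof. by rewrite innerE mxE; apply: eq_bigr => i _; rewrite !mxE. Qed.

Lemma eig_col n (A Q : 'M[C]_n) d k :
  A *m Q = Q *m diag_mx d -> A *m col k Q = d 0 k *: col k Q.
Proof.
move=> /matrixP H; apply/matrixP => i j.
rewrite ord1 {j} !mxE; move: (H i k); rewrite mul_mx_diag !mxE mulrC => <-.
by apply: eq_bigr => l _; rewrite !mxE.
Qed.


Lemma mul_col n m p (A : 'M[C]_(m, n)) (B : 'M[C]_(n, p)) k i :
  (A *m col k B) i 0 = (A *m B) i k.
Proof. by rewrite !mxE; apply: eq_bigr => l _; rewrite !mxE. Qed.


Lemma beta_bounds n (Psi : 'cV[C]_n) Omega beta :
  verification_operator Omega Psi -> second_largest_eigenvalue Omega beta ->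
  0 <= beta /\ beta <= 1.
Proof.
case=> hO [_ psdO] [_ psd1] _ _ [[v [vn0 ev]] _ _].
have gt := inner_gt0 vn0.
split.
  by have := psdO v; rewrite ev innerZr pmulr_lge0.
have := psd1 v; rewrite mulmxBl mul1mx ev.
have -> : v - beta *: v = (1 - beta) *: v by rewrite scalerBl scale1r.
by rewrite innerZr pmulr_lge0 // subr_ge0.
Qed.


Lemma tr_bound n (Psi : 'cV[C]_n) Omega beta sigma :
  unit_vector Psi -> verification_operator Omega Psi ->
  second_largest_eigenvalue Omega beta -> density sigma ->
  0 <= \tr (Omega *m sigma) /\
  \tr (Omega *m sigma) <= beta + (1 - beta) * inner Psi (sigma *m Psi).
Proof.
move=> uPsi vO sO [[hs psds] trs].
have [b0 b1] := beta_bounds vO sO.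
case: vO => hO [_ psdO] [_ psd1] OPsi Ouniq.
case: sO => _ _ betamax.
have [Q [d [QQ QQ' eqO]]] := spectral_decomp hO.
have OQ : Omega *m Q = Q *m diag_mx d by rewrite eqO -mulmxA QQ' mulmx1.
pose u k := col k Q.
have uu k : inner (u k) (u k) = 1 by rewrite inner_col mul_col QQ' mxE eqxx.
have eu k : Omega *m u k = d 0 k *: u k := eig_col k OQ.
have d0 k : 0 <= d 0 k by have := psdO (u k); rewrite eu innerZr uu mulr1.
set s := inner Psi (sigma *m Psi).
have s0 : 0 <= s := psds Psi.
pose tau k := inner (u k) (sigma *m u k).
pose w k := inner (u k) Psi.
have tau0 k : 0 <= tau k := psds (u k).
have trE : \tr (Omega *m sigma) = \sum_k d 0 k * tau k.
  rewrite eqO -!mulmxA mxtrace_mulC -mulmxA /mxtrace; apply: eq_bigr => k _.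
  by rewrite mul_diag_mx mxE /tau inner_col mulmxA mul_col.
have sumt : \sum_k tau k = 1.
  rewrite -trs -[in RHS](mul1mx sigma) -QQ -mulmxA mxtrace_mulC /mxtrace.
  by apply: eq_bigr => k _; rewrite /tau inner_col mulmxA mul_col.
have sumw : \sum_k (w k)^* * w k = 1.
  rewrite -uPsi; have -> : \sum_k (w k)^* * w k = inner (adjmx Q *m Psi) (adjmx Q *m Psi).
    by rewrite innerE; apply: eq_bigr => k _; rewrite /w inner_col.
  by rewrite /inner adjmxM adjmxK mulmxA -(mulmxA _ Q) QQ mulmx1.
have step k : d 0 k * tau k <= beta * tau k + (1 - beta) * ((w k)^* * w k * s).
  case: (eqVneq (d 0 k) 1) => [d1|dn1].
    have := Ouniq (u k); rewrite eu d1 scale1r => /(_ erefl) [c uc].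
    rewrite /tau /w uc -scalemxAr !innerZl !innerZr uPsi mulr1 conjCK -/s.
    rewrite le_eqVlt; apply/orP; left; apply/eqP; ring.
  have ev : is_eigenvalue Omega (d 0 k).
    exists (u k); split; last exact: eu.
    apply/eqP => h; move: (uu k); rewrite h innerE big1.
      by move/eqP; rewrite eq_sym oner_eq0.
    by move=> i _; rewrite mxE rmorph0 mul0r.
  have dle := betamax _ ev dn1.
  apply: le_trans (ler_wpM2r (tau0 k) dle) _; rewrite lerDl.
  by rewrite mulr_ge0 ?subr_ge0 // mulr_ge0 // mulrC mul_conjC_ge0.
split.
  by rewrite trE sumr_ge0 // => k _; rewrite mulr_ge0.
rewrite trE; apply: le_trans (ler_sum _ (fun k _ => step k)) _.
rewrite big_split /= -mulr_sumr sumt mulr1 -mulr_sumr -mulr_suml sumw mul1r.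
by [].
Qed.

End Helpers.

Theorem proposition1 (R : realType) (n N : nat)
    (Psi : 'cV[R[i]]_n) (Omega : 'M[R[i]]_n) (beta : R[i])
    (sigma : 'I_N -> 'M[R[i]]_n) :
  unit_vector Psi ->
  verification_operator Omega Psi ->
  second_largest_eigenvalue Omega beta ->
  (forall j, density (sigma j)) ->
  let eps := fun j : 'I_N => 1 - inner Psi (sigma j *m Psi) in
  let eps_bar := (\sum_(j < N) eps j) / N%:R in
  \prod_(j < N) \tr (Omega *m sigma j)
    <= (1 - spectral_gap beta * eps_bar) ^+ N.
Proof.
move=> uPsi vO sO dens; cbv zeta.
set eps := fun j : 'I_N => 1 - inner Psi (sigma j *m Psi).
set eps_bar := (\sum_(j < N) eps j) / N%:R.
have [b0 b1] := beta_bounds vO sO.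
case: (posnP N) => [N0|Npos].
  by subst N; rewrite big_ord0 expr0.
pose x j := 1 - spectral_gap beta * eps j.
have xE j : x j = beta + (1 - beta) * inner Psi (sigma j *m Psi).
  by rewrite /x /eps /spectral_gap; ring.
have x0 j : 0 <= x j.
  rewrite xE addr_ge0 // mulr_ge0 ?subr_ge0 //.
  by case: (dens j) => [[_ p] _]; apply: p.
apply: (@le_trans _ _ (\prod_(j < N) x j)).
  apply: ler_prod => j _; have [h0 h1] := tr_bound uPsi vO sO (dens j).
  by rewrite h0 /= xE.
have H := leif_AGM (A := predT) (fun i _ => x0 i).
move: (H.1); rewrite cardT size_enum_ord.
have -> : (\sum_(i in predT) x i) / N%:R = 1 - spectral_gap beta * eps_bar.
  rewrite /eps_bar /x big_split /= sumr_const cardT size_enum_ord sumrN -mulr_sumr.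
  have -> : \sum_(i in predT) eps i = \sum_(j < N) eps j by apply: eq_bigl.
  field; by rewrite pnatr_eq0 -lt0n.
have -> : \prod_(i in predT) x i = \prod_(j < N) x j by apply: eq_bigl.
by [].
Qed.
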